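(* Let $k$ be a field of characteristic $p>0$. Any nontrivial infinitesimal unipotent subgroup scheme of $\mathrm{GL}_{2,k}$ is equal to one of the following subgroup schemes of $\mathrm{SL}_{2,k}$: $$H_{s_1,s_2,n}=\Big\{\begin{pmatrix} x_{11}&x_{12}\\ x_{21}&x_{22}\end{pmatrix}\in \ker F^n_{\mathrm{SL}_{2,k}} \;\Big|\; s_i(x_{ii}-1)+s_j x_{ij}=0 \text{ for } (i,j)=(1,2),(2,1),\ x_{22}=2-x_{11}\Big\},$$ for some $[s_1:s_2]\in\mathbb{P}^1(k)$ and some $n\ge1$. *)

(* Defs.v *)
From HB Require Import structures.
From mathcomp Require Import all_boot all_algebra.
From mathcomp Require Import mpoly.
Set Implicit Arguments. Unset Strict Implicit. Unset Printing Implicit Defensive.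
Import GRing.Theory.
Local Open Scope ring_scope.

(* Coordinate ring k[x11,x12,x21,x22] = {mpoly k[4]}; variable index 2*i+j
   (i,j in {0,1}) stands for x_{(i+1)(j+1)}.
   k[GL2 x GL2] coordinates (without det^{-1}) = {mpoly k[8]}: indices 0..3 for the
   left factor, 4..7 for the right factor. *)

Section GL2.
Variable k : fieldType.

Definition xv (i j : nat) : {mpoly k[4]} := 'X_(inord (i * 2 + j)).
Definition xl (i j : nat) : {mpoly k[8]} := 'X_(inord (i * 2 + j)).
Definition xr (i j : nat) : {mpoly k[8]} := 'X_(inord (4 + (i * 2 + j))).

(* f |-> f (x) 1 and f |-> 1 (x) f *)
Definition inlt : 4.-tuple {mpoly k[8]} := [tuple xl (t %/ 2) (t %% 2) | t < 4].
Definition inrt : 4.-tuple {mpoly k[8]} := [tuple xr (t %/ 2) (t %% 2) | t < 4].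
Definition comult : 4.-tuple {mpoly k[8]} :=
  [tuple xl (t %/ 2) 0 * xr 0 (t %% 2) + xl (t %/ 2) 1 * xr 1 (t %% 2) | t < 4].
Definition unit_pt : 'I_4 -> k := fun t => if (val t == 0)%N || (val t == 3)%N then 1 else 0.
Definition counit (f : {mpoly k[4]}) : k := f.@[unit_pt].

Definition detp : {mpoly k[4]} := xv 0 0 * xv 1 1 - xv 0 1 * xv 1 0.
(* antipode, valid modulo an ideal containing x_ij^(p^n) - delta_ij,
   where det^(-1) = det^(p^n - 1) *)
Definition antipt (q : nat) : 4.-tuple {mpoly k[4]} :=
  [tuple (if val t == 0 then xv 1 1 else if val t == 1 then - xv 0 1
          else if val t == 2 then - xv 1 0 else xv 0 0) * detp ^+ q.-1 | t < 4].

Definition delta (i j : nat) : {mpoly k[4]} := if i == j then 1 else 0.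

Definition is_ideal (I : {mpoly k[4]} -> Prop) : Prop :=
  [/\ I 0, (forall f g, I f -> I g -> I (f + g)) & (forall a f, I f -> I (a * f))].

(* the ideal I (x) A + A (x) I of k[x] (x) k[x] *)
Definition in_Jideal (I : {mpoly k[4]} -> Prop) (h : {mpoly k[8]}) : Prop :=
  exists (m : nat) (a b : 'I_m -> {mpoly k[8]}) (f g : 'I_m -> {mpoly k[4]}),
    [/\ forall i, I (f i), forall i, I (g i) &
        h = \sum_(i < m) (a i * (f i \mPo inlt) + b i * (g i \mPo inrt))].

Definition in_frob_kernel (p n : nat) (I : {mpoly k[4]} -> Prop) : Prop :=
  forall i j, (i < 2)%N -> (j < 2)%N -> I (xv i j ^+ (p ^ n) - delta i j).

Definition infinitesimal_subgroup (p : nat) (I : {mpoly k[4]} -> Prop) : Prop :=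
  is_ideal I /\
  exists n : nat, [/\ in_frob_kernel p n I,
    (forall f, I f -> counit f = 0),
    (forall f, I f -> in_Jideal I (f \mPo comult)) &
    (forall f, I f -> I (f \mPo antipt (p ^ n)))].

(* finite-dimensional comodule over k[G] = k[x]/I, given by a matrix of
   coefficients rho (representatives in k[x]) *)
Definition is_comodule (I : {mpoly k[4]} -> Prop) (m : nat)
  (rho : 'I_m -> 'I_m -> {mpoly k[4]}) : Prop :=
  (forall i j, in_Jideal I ((rho i j \mPo comult) -
      \sum_(l < m) (rho i l \mPo inlt) * (rho l j \mPo inrt))) /\
  (forall i j, counit (rho i j) = (i == j)%:R).

(* unipotent: every nonzero finite-dimensional representation has a nonzero
   fixed vector *)
Definition unipotent (I : {mpoly k[4]} -> Prop) : Prop :=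
  forall (m : nat) (rho : 'I_m -> 'I_m -> {mpoly k[4]}), (0 < m)%N ->
    is_comodule I rho ->
    exists v : 'I_m -> k, (exists i, v i != 0) /\
      forall i, I (\sum_(j < m) (v j)%:MP * rho i j - (v i)%:MP).

(* G is not the trivial group: I differs from the augmentation ideal *)
Definition nontrivial_sub (I : {mpoly k[4]} -> Prop) : Prop :=
  exists f, counit f = 0 /\ ~ I f.

Definition in_ideal_gen (gs : seq {mpoly k[4]}) (f : {mpoly k[4]}) : Prop :=
  exists cs : 'I_(size gs) -> {mpoly k[4]},
    f = \sum_(i < size gs) cs i * nth 0 gs i.

Definition H_gens (p : nat) (s1 s2 : k) (n : nat) : seq {mpoly k[4]} :=
  [:: xv 0 0 ^+ (p ^ n) - 1; xv 0 1 ^+ (p ^ n); xv 1 0 ^+ (p ^ n);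
      xv 1 1 ^+ (p ^ n) - 1; detp - 1;
      s1%:MP * (xv 0 0 - 1) + s2%:MP * xv 0 1;
      s2%:MP * (xv 1 1 - 1) + s1%:MP * xv 1 0;
      xv 1 1 - (2 - xv 0 0)].

End GL2.

(* Main.v *)
Require Import Defs.
From HB Require Import structures.
From mathcomp Require Import all_boot all_algebra.
From mathcomp Require Import mpoly.
From mathcomp Require Import ring.
Set Implicit Arguments. Unset Strict Implicit. Unset Printing Implicit Defensive.
Import GRing.Theory.
Local Open Scope ring_scope.

Lemma frob (R : comNzRingType) p n (x y : R) : p \in [pchar R] ->
  (x + y) ^+ (p ^ n) = x ^+ (p ^ n) + y ^+ (p ^ n).
Proof.
move=> hp; elim: n => [|n IH]; first by rewrite expn0 !expr1.
by rewrite expnSr !exprM IH -!(pFrobenius_autE hp) rmorphD.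
Qed.

Lemma hom_uniq (k : fieldType) n (S : comNzRingType) (F G : {mpoly k[n]} -> S) :
  (forall x y, F (x + y) = F x + F y) -> (forall x y, F (x * y) = F x * F y) -> F 1 = 1 ->
  (forall x y, G (x + y) = G x + G y) -> (forall x y, G (x * y) = G x * G y) -> G 1 = 1 ->
  (forall c, F c%:MP = G c%:MP) -> (forall i, F 'X_i = G 'X_i) -> forall f, F f = G f.
Proof.
move=> FD FM F1 GD GM G1 FGC FGX.
have F0 : F 0 = 0 by apply/(addrI (F 0)); rewrite -FD !addr0.
have G0 : G 0 = 0 by apply/(addrI (G 0)); rewrite -GD !addr0.
have FX : forall x e, F (x ^+ e) = F x ^+ e.
  by move=> x; elim=> [|e IH]; rewrite ?expr0 ?F1 // !exprS FM IH.
have GX : forall x e, G (x ^+ e) = G x ^+ e.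
  by move=> x; elim=> [|e IH]; rewrite ?expr0 ?G1 // !exprS GM IH.
elim/mpolyind=> [|c m p _ _ IH]; first by rewrite F0 G0.
rewrite FD GD IH -mul_mpolyC FM GM FGC mpolyXE_id.
rewrite (big_morph F FM F1) (big_morph G GM G1); congr (_ * _ + _).
by apply: eq_bigr => i _; rewrite FX GX FGX.
Qed.


Section Igen.
Variable k : fieldType.
Implicit Types (gs : seq {mpoly k[4]}) (f g : {mpoly k[4]}).

Lemma igen0 gs : in_ideal_gen gs 0.
Proof. by exists (fun _ => 0); rewrite big1 // => i _; rewrite mul0r. Qed.

Lemma igenD gs f g : in_ideal_gen gs f -> in_ideal_gen gs g -> in_ideal_gen gs (f + g).
Proof.
move=> [cf ->] [cg ->]; exists (fun i => cf i + cg i).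
by rewrite -big_split; apply: eq_bigr => i _; rewrite mulrDl.
Qed.

Lemma igenM gs a f : in_ideal_gen gs f -> in_ideal_gen gs (a * f).
Proof.
move=> [cf ->]; exists (fun i => a * cf i).
by rewrite mulr_sumr; apply: eq_bigr => i _; rewrite mulrA.
Qed.

Lemma igenN gs f : in_ideal_gen gs f -> in_ideal_gen gs (- f).
Proof. by move=> h; rewrite -mulN1r; apply: igenM. Qed.

Lemma igenB gs f g : in_ideal_gen gs f -> in_ideal_gen gs g -> in_ideal_gen gs (f - g).
Proof. by move=> hf hg; apply: igenD => //; apply: igenN. Qed.

Lemma igen_nth gs i : (i < size gs)%N -> in_ideal_gen gs (nth 0 gs i).
Proof.
move=> hi; exists (fun j : 'I_(size gs) => ((val j == i)%:R : {mpoly k[4]})).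
rewrite (bigD1 (Ordinal hi)) //= eqxx mul1r big1 ?addr0 // => j hj.
have -> : (val j == i) = false by apply/negbTE; apply: contra hj => /eqP e; apply/eqP/val_inj.
by rewrite mul0r.
Qed.

Lemma igen_I (I : {mpoly k[4]} -> Prop) gs f : is_ideal I ->
  (forall i, (i < size gs)%N -> I (nth 0 gs i)) -> in_ideal_gen gs f -> I f.
Proof.
move=> [I0 ID IM] hg [cs ->]; apply: (big_ind I) => // i _.
by apply: IM; apply: hg.
Qed.

Lemma ideal_N (I : {mpoly k[4]} -> Prop) f : is_ideal I -> I f -> I (- f).
Proof. by move=> [_ _ IM] h; rewrite -mulN1r; apply: IM. Qed.

Lemma ideal_B (I : {mpoly k[4]} -> Prop) f g : is_ideal I -> I f -> I g -> I (f - g).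
Proof. by move=> hI hf hg; case: (hI) => _ ID _; apply: ID => //; apply: ideal_N. Qed.

End Igen.

Section Main.
Variables (k : fieldType) (v0 v1 u0 u1 : k).
Hypothesis huv : u0 * v0 + u1 * v1 = 1.

Definition dn (t : nat) : k := if (t == 0)%N || (t == 3)%N then 1 else 0.
Definition Nn (t : nat) : k :=
  if t == 0%N then v0 * v1 else if t == 1%N then - (v0 * v0)
  else if t == 2%N then v1 * v1 else - (v0 * v1).
Definition hphi (t : nat) : {poly k} := (dn t)%:P + (Nn t)%:P * 'X.
Definition phi (f : {mpoly k[4]}) : {poly k} := mmap (@polyC k) (fun t : 'I_4 => hphi t) f.

Definition ell : {mpoly k[4]} := u0%:MP * u1%:MP * (xv k 0 0 - xv k 1 1)
  - u0%:MP * u0%:MP * xv k 0 1 + u1%:MP * u1%:MP * xv k 1 0.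
Definition mlift (g : {poly k}) : {mpoly k[4]} := (map_poly (@mpolyC 4 k) g).[ell].

Lemma phiD f g : phi (f + g) = phi f + phi g. Proof. exact: rmorphD. Qed.
Lemma phiB f g : phi (f - g) = phi f - phi g. Proof. exact: rmorphB. Qed.
Lemma phiN f : phi (- f) = - phi f. Proof. exact: rmorphN. Qed.
Lemma phiM f g : phi (f * g) = phi f * phi g. Proof. exact: rmorphM. Qed.
Lemma phi1 : phi 1 = 1. Proof. exact: rmorph1. Qed.
Lemma phiC c : phi c%:MP = c%:P. Proof. exact: mmapC. Qed.
Lemma phiX (t : 'I_4) : phi 'X_t = hphi t.
Proof. by rewrite /phi mmapX mmap1U. Qed.

Lemma Xt_xv (t : 'I_4) : 'X_t = xv k (t %/ 2) (t %% 2).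
Proof. by rewrite /xv -divn_eq inord_val. Qed.

Lemma xv_X i j : (i < 2)%N -> (j < 2)%N -> xv k i j = 'X_(inord (i * 2 + j) : 'I_4).
Proof. by []. Qed.

Lemma phi_xv i j : (i < 2)%N -> (j < 2)%N -> phi (xv k i j) = hphi (i * 2 + j).
Proof.
move=> hi hj; rewrite /xv phiX inordK //.
by case: i hi => [|[|]] //; case: j hj => [|[|]].
Qed.

Lemma phi_ell : phi ell = 'X.
Proof.
rewrite /ell !(phiD, phiN, phiM, phiC) !phi_xv //.
rewrite /hphi /dn /Nn /=.
apply/eqP; rewrite -subr_eq0; apply/eqP.
transitivity (((u0 * v0 + u1 * v1) ^+ 2 - 1)%:P * ('X : {poly k})); last by rewrite huv expr1n subrr mul0r.
ring.
Qed.


Lemma mliftD g h : mlift (g + h) = mlift g + mlift h.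
Proof. by rewrite /mlift rmorphD hornerD. Qed.
Lemma mliftM g h : mlift (g * h) = mlift g * mlift h.
Proof. by rewrite /mlift rmorphM hornerM. Qed.
Lemma mliftC c : mlift c%:P = c%:MP.
Proof. by rewrite /mlift map_polyC hornerC. Qed.
Lemma mliftX : mlift 'X = ell.
Proof. by rewrite /mlift map_polyX hornerX. Qed.
Lemma mlift0 : mlift 0 = 0.
Proof. by rewrite /mlift rmorph0 horner0. Qed.

Lemma phi_mlift g : phi (mlift g) = g.
Proof.
elim/poly_ind: g => [|g c IH]; first by rewrite mlift0 /phi mmap0.
by rewrite mliftD mliftM mliftX mliftC phiD phiM IH phi_ell phiC.
Qed.

Lemma by_E (X Y Q : {mpoly k[4]}) :
  X - Y = (1 - (u0 * v0 + u1 * v1)%:MP) * Q -> X = Y.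
Proof. by rewrite huv subrr mul0r => /eqP; rewrite subr_eq0 => /eqP. Qed.

Lemma comb gs (c5 c6 c7 : {mpoly k[4]}) : (7 < size gs)%N ->
  in_ideal_gen gs (c5 * nth 0 gs 5 + c6 * nth 0 gs 6 + c7 * nth 0 gs 7).
Proof.
move=> h; apply: igenD; first apply: igenD.
- by apply: igenM; apply: igen_nth; apply: leq_trans h.
- by apply: igenM; apply: igen_nth; apply: leq_trans h.
- by apply: igenM; apply: igen_nth.
Qed.

Variable p : nat.

Lemma keyX n (t : 'I_4) :
  in_ideal_gen (H_gens p v0 v1 n) ('X_t - mlift (phi 'X_t)).
Proof.
rewrite phiX /hphi mliftD mliftM mliftX !mliftC Xt_xv.
pose U0 := u0%:MP_[4]; pose U1 := u1%:MP_[4]; pose V0 := v0%:MP_[4]; pose V1 := v1%:MP_[4].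
pose E := (u0 * v0 + u1 * v1)%:MP_[4].
set gs := H_gens p v0 v1 n.
have hs : (7 < size gs)%N by [].
pose a := xv k 0 0 - 1; pose b := xv k 0 1; pose c := xv k 1 0; pose d := xv k 1 1 - 1.
pose r0 := V0 * (xv k 0 0 - 1) + V1 * xv k 0 1.
pose r1 := V1 * (xv k 1 1 - 1) + V0 * xv k 1 0.
pose tau := xv k 1 1 - (2 - xv k 0 0).
case: t => [[|[|[|[|t]]]] ht] //=; rewrite /dn /Nn /=.
- rewrite (_ : _ - _ = (U0 - U0 * U1 * V1) * r0 + (- (U1 * U1 * V1)) * r1 + (U1 * V1) * tau);
    first exact: comb.
  apply: (@by_E _ _ ((1 + E) * a - r0 * U0 - U1 * V1 * tau)).
  rewrite /U0 /U1 /V0 /V1 /E /a /b /c /d /r0 /r1 /tau /ell; ring.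
- rewrite (_ : _ - _ = (U1 + U0 * U1 * V0) * r0 + (U1 * U1 * V0) * r1 + (- (U1 * V0)) * tau);
    first exact: comb.
  apply: (@by_E _ _ ((1 + E) * b - r0 * U1 + U1 * V0 * tau)).
  rewrite /U0 /U1 /V0 /V1 /E /a /b /c /d /r0 /r1 /tau /ell; ring.
- rewrite (_ : _ - _ = (U0 * U0 * V1) * r0 + (U0 + U0 * U1 * V1) * r1 + (- (U0 * V1)) * tau);
    first exact: comb.
  apply: (@by_E _ _ ((1 + E) * c - r1 * U0 + U0 * V1 * tau)).
  rewrite /U0 /U1 /V0 /V1 /E /a /b /c /d /r0 /r1 /tau /ell; ring.
- rewrite (_ : _ - _ = (- (U0 * U0 * V0)) * r0 + (U1 - U0 * U1 * V0) * r1 + (U0 * V0) * tau);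
    first exact: comb.
  apply: (@by_E _ _ ((1 + E) * d - r1 * U1 - U0 * V0 * tau)).
  rewrite /U0 /U1 /V0 /V1 /E /a /b /c /d /r0 /r1 /tau /ell; ring.
Qed.


Lemma mlift1 : mlift 1 = 1.
Proof. by rewrite -polyC1 mliftC. Qed.

Lemma keyA n f : in_ideal_gen (H_gens p v0 v1 n) (f - mlift (phi f)).
Proof.
set gs := H_gens p v0 v1 n.
pose Q x := in_ideal_gen gs (x - mlift (phi x)).
have QM : forall x y, Q x -> Q y -> Q (x * y).
  move=> x y hx hy; rewrite /Q phiM mliftM.
  rewrite (_ : x * y - _ = x * (y - mlift (phi y)) + mlift (phi y) * (x - mlift (phi x))); last by ring.
  by apply: igenD; apply: igenM.
have Q1 : Q 1 by rewrite /Q phi1 mlift1 subrr; apply: igen0.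
have QC : forall c, Q c%:MP by move=> c; rewrite /Q phiC mliftC subrr; apply: igen0.
have QX : forall x e, Q x -> Q (x ^+ e).
  by move=> x e hx; elim: e => [|e IH]; rewrite ?expr0 // exprS; apply: (QM).
change (Q f); move: f; apply: mpolyind => [|c m q _ _ IH]; first by rewrite /Q /phi mmap0 mlift0 subrr; apply: igen0.
rewrite /Q phiD mliftD opprD addrACA; apply: igenD => //.
rewrite -mul_mpolyC; apply: (QM) => //; rewrite mpolyXE_id.
apply: (big_ind Q Q1 QM) => i _; apply: QX; apply: keyX.
Qed.


Lemma counit_phi f : counit f = (phi f).[0].
Proof.
move: f; apply: (@hom_uniq k 4 k (@counit k) (fun f => (phi f).[0])) => //.
- by move=> x y; rewrite /counit mevalD.
- by move=> x y; rewrite /counit mevalM.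
- by rewrite /counit meval1.
- by move=> x y; rewrite phiD hornerD.
- by move=> x y; rewrite phiM hornerM.
- by rewrite phi1 hornerC.
- by move=> c; rewrite /counit mevalC phiC hornerC.
- move=> i; rewrite /counit mevalXU phiX /hphi hornerD hornerM hornerX !hornerC mulr0 addr0.
  by rewrite /unit_pt /dn.
Qed.

Definition TT : {poly {poly k}} := ('X : {poly k})%:P.
Definition h2 (i : 'I_8) : {poly {poly k}} :=
  if (i < 4)%N then (hphi i)%:P else map_poly (@polyC k) (hphi (i - 4)).
Definition phi2 (f : {mpoly k[8]}) : {poly {poly k}} :=
  mmap ((@polyC {poly k}) \o (@polyC k)) h2 f.

Lemma phi2D f g : phi2 (f + g) = phi2 f + phi2 g. Proof. exact: rmorphD. Qed.
Lemma phi2N f : phi2 (- f) = - phi2 f. Proof. exact: rmorphN. Qed.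
Lemma phi2M f g : phi2 (f * g) = phi2 f * phi2 g. Proof. exact: rmorphM. Qed.
Lemma phi21 : phi2 1 = 1. Proof. exact: rmorph1. Qed.
Lemma phi2_sum (I : Type) (r : seq I) (P : pred I) (F : I -> {mpoly k[8]}) :
  phi2 (\sum_(i <- r | P i) F i) = \sum_(i <- r | P i) phi2 (F i).
Proof. exact: rmorph_sum. Qed.

Lemma phi2X (i : 'I_8) : phi2 'X_i = h2 i.
Proof. by rewrite /phi2 mmapX mmap1U. Qed.
Lemma phi2C c : phi2 c%:MP = c%:P%:P.
Proof. by rewrite /phi2 mmapC. Qed.

Lemma L1 g : phi2 (g \mPo inlt k) = (phi g)%:P.
Proof.
move: g; apply: (@hom_uniq k 4 _ (fun g => phi2 (g \mPo inlt k)) (fun g => (phi g)%:P)).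
- by move=> x y /=; rewrite rmorphD phi2D.
- by move=> x y /=; rewrite rmorphM phi2M.
- by rewrite /= rmorph1 phi21.
- by move=> x y /=; rewrite phiD rmorphD.
- by move=> x y /=; rewrite phiM rmorphM.
- by rewrite /= phi1 rmorph1.
- by move=> c /=; rewrite comp_mpolyC phi2C phiC.
- move=> i /=; rewrite comp_mpolyXU -tnth_nth tnth_mktuple /xl -divn_eq phi2X phiX.
  rewrite /h2 inordK; last by apply: leq_trans (ltn_ord i) _.
  by rewrite ltn_ord.
Qed.

Lemma L2 g : phi2 (g \mPo inrt k) = map_poly (@polyC k) (phi g).
Proof.
move: g; apply: (@hom_uniq k 4 _ (fun g => phi2 (g \mPo inrt k)) (fun g => map_poly (@polyC k) (phi g))).
- by move=> x y /=; rewrite rmorphD phi2D.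
- by move=> x y /=; rewrite rmorphM phi2M.
- by rewrite /= rmorph1 phi21.
- by move=> x y /=; rewrite phiD rmorphD.
- by move=> x y /=; rewrite phiM rmorphM.
- by rewrite /= phi1 rmorph1.
- by move=> c /=; rewrite comp_mpolyC phi2C phiC map_polyC.
- move=> i /=; rewrite comp_mpolyXU -tnth_nth tnth_mktuple /xr -divn_eq phi2X phiX.
  rewrite /h2 inordK; last by move: (ltn_ord i); rewrite -(ltn_add2l 4).
  by rewrite ltnNge leq_addr /= addKn.
Qed.


Definition cc : {rmorphism k -> {poly {poly k}}} := ((@polyC {poly k}) \o (@polyC k))%FUN.

Lemma hl t : (hphi t)%:P = (dn t)%:P%:P + (Nn t)%:P%:P * TT.
Proof. by rewrite /hphi /TT rmorphD rmorphM. Qed.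
Lemma hr t : map_poly (@polyC k) (hphi t) = (dn t)%:P%:P + (Nn t)%:P%:P * 'X.
Proof. by rewrite /hphi rmorphD rmorphM /= !map_polyC map_polyX. Qed.
Lemma hc t : (map_poly cc (hphi t)).[TT + 'X] = (dn t)%:P%:P + (Nn t)%:P%:P * (TT + 'X).
Proof. by rewrite /hphi rmorphD rmorphM /= !map_polyC map_polyX hornerD hornerM !hornerC hornerX. Qed.

Lemma h2l a : (a < 4)%N -> h2 (inord a) = (hphi a)%:P.
Proof. by move=> ha; rewrite /h2 inordK ?ha //; apply: leq_trans ha _. Qed.
Lemma h2r a : (a < 4)%N -> h2 (inord (4 + a)) = map_poly (@polyC k) (hphi a).
Proof.
move=> ha; rewrite /h2 inordK; last by rewrite -(ltn_add2l 4) in ha.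
by rewrite ltnNge leq_addr /= addKn.
Qed.

Lemma L3 f : phi2 (f \mPo comult k) = (map_poly cc (phi f)).[TT + 'X].
Proof.
move: f; apply: (@hom_uniq k 4 _ (fun g => phi2 (g \mPo comult k)) (fun g => (map_poly cc (phi g)).[TT + 'X])).
- by move=> x y /=; rewrite rmorphD phi2D.
- by move=> x y /=; rewrite rmorphM phi2M.
- by rewrite /= rmorph1 phi21.
- by move=> x y /=; rewrite phiD rmorphD hornerD.
- by move=> x y /=; rewrite phiM rmorphM hornerM.
- by rewrite /= phi1 rmorph1 hornerC.
- by move=> c /=; rewrite comp_mpolyC phi2C phiC map_polyC hornerC.
- move=> i /=; rewrite comp_mpolyXU -tnth_nth tnth_mktuple /xl /xr phiX hc.
  rewrite phi2D !phi2M !phi2X.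
  case: i => [[|[|[|[|i]]]] hi] //=; rewrite !h2r // !h2l // !hl !hr /dn /Nn /TT /=; ring.
Qed.


Lemma J_transfer (I : {mpoly k[4]} -> Prop) m h :
  (forall g, I g -> 'X^m %| phi g) -> in_Jideal I h ->
  exists A B : {poly {poly k}}, phi2 h = A * TT ^+ m + B * 'X ^+ m.
Proof.
move=> hdiv [mm [a [b [f [g [hf hg ->]]]]]].
exists (\sum_(i < mm) phi2 (a i) * (phi (f i) %/ 'X^m)%:P).
exists (\sum_(i < mm) phi2 (b i) * map_poly (@polyC k) (phi (g i) %/ 'X^m)).
rewrite phi2_sum !mulr_suml -big_split /=; apply: eq_bigr => i _.
rewrite phi2D !phi2M L1 L2.
rewrite -{1}(divpK (hdiv _ (hf i))) -{1}(divpK (hdiv _ (hg i))).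
rewrite !rmorphM rmorphXn /= map_polyXn /TT.
by rewrite !mulrA.
Qed.

Lemma sum_pick (R : nzRingType) n j (F : nat -> R) : (j < n)%N ->
  \sum_(i < n) ((j == i)%:R * F i) = F j.
Proof.
move=> hj; rewrite (bigD1 (Ordinal hj)) //= eqxx mul1r big1 ?addr0 // => i hi.
rewrite (_ : (j == i) = false) ?mul0r //; apply/negbTE; apply: contra hi => /eqP e.
by apply/eqP/val_inj; rewrite /= e.
Qed.

Lemma binom_zero m j (A B : {poly {poly k}}) : (0 < j)%N -> (j < m)%N ->
  (TT + 'X) ^+ m = A * TT ^+ m + B * 'X ^+ m -> ('C(m, j)%:R : k) = 0.
Proof.
move=> j0 jm E.
have := congr1 (fun P : {poly {poly k}} => (P`_(m - j))`_j) E.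
rewrite exprDn /= coefD /TT -!rmorphXn coefMC coefMXn.
rewrite (_ : (m - j < m)%N) ?coef0 ?addr0; last by rewrite ltn_subrL j0 (leq_trans j0 (ltnW jm)).
rewrite coefMXn jm coef_sum => <-.
rewrite (eq_bigr (fun i : 'I_m.+1 => (((m - j)%N == i)%:R * ('X^(m - i) *+ 'C(m, i))))); last first.
  move=> i _; rewrite coefMn -rmorphXn coefCM coefXn mulr_natr mulrnAr.
  by rewrite mulr_natl.
rewrite (@sum_pick _ m.+1 (m - j) (fun i => ('X^(m - i) *+ 'C(m, i) : {poly k}))); last by rewrite ltnS leq_subr.
by rewrite coefMn coefXn subKn ?(ltnW jm) // eqxx bin_sub // (ltnW jm).
Qed.


Lemma binom_nz q e m' : q \in [pchar k] -> (0 < m')%N ->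
  ('C(m' * q ^ e, q ^ e)%:R : k) = m'%:R.
Proof.
move=> hq m0; set P := (q ^ e)%N.
have P0 : (0 < P)%N by rewrite expn_gt0 prime_gt0 // (pcharf_prime hq).
have hq' : q \in [pchar {poly k}] by rewrite pchar_poly.
have E1 : (('X + 1 : {poly k}) ^+ (m' * P))`_P = 'C(m' * P, P)%:R.
  rewrite exprD1n coef_sum.
  rewrite (eq_bigr (fun i : 'I_(m' * P).+1 => ((P == i)%:R * ('C(m' * P, i)%:R : k)))); last first.
    by move=> i _; rewrite coefMn coefXn mulr_natr.
  by rewrite (@sum_pick _ _ P (fun i => ('C(m' * P, i)%:R : k))) // ltnS leq_pmull.
have E2 : (('X + 1 : {poly k}) ^+ (m' * P))`_P = m'%:R.
  rewrite mulnC exprM /P (@frob _ q e _ _ hq') expr1n exprD1n coef_sum -/P.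
  rewrite (eq_bigr (fun i : 'I_m'.+1 => ((1%N == i)%:R * ('C(m', i)%:R : k)))); last first.
    move=> i _; rewrite coefMn -exprM coefXn -{1}(muln1 P) eqn_pmul2l //.
    by rewrite mulr_natr.
  by rewrite (@sum_pick _ _ 1 (fun i => ('C(m', i)%:R : k))) ?bin1.
by rewrite -E1 E2.
Qed.


Lemma gcd_arg (Q : {poly k} -> Prop) m q0 :
  (forall a b, Q a -> Q b -> Q (a + b)) -> (forall a b, Q b -> Q (a * b)) ->
  Q ('X^q0) -> (forall j, Q ('X^j) -> (m <= j)%N) -> forall g, Q g -> 'X^m %| g.
Proof.
move=> QD QM Qq hmin g Qg.
have [[a b] /= hab] := Bezoutp g ('X^q0).
have Qe : Q (a * g + b * 'X^q0) by apply: QD; apply: QM.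
have : (a * g + b * 'X^q0) %| ('X - 0%:P)^+q0.
  by rewrite polyC0 subr0 (eqp_dvdl _ hab) dvdp_gcdr.
case/dvdp_exp_XsubCP => j _; rewrite polyC0 subr0 => hej.
have Qj : Q ('X^j).
  case/eqpP: hej => [[c1 c2] /= /andP [c1n c2n] hc].
  have -> : 'X^j = (c2^-1 * c1)%:P * (a * g + b * 'X^q0).
    by rewrite mul_polyC -scalerA hc scalerA mulVf // scale1r.
  by apply: QM.
have hmj := hmin j Qj.
apply: (dvdp_trans (dvdp_exp2l 'X hmj)).
by rewrite -(eqp_dvdl _ hej) (eqp_dvdl _ hab) dvdp_gcdl.
Qed.

Lemma phiXn f e : phi (f ^+ e) = phi f ^+ e. Proof. exact: rmorphXn. Qed.

Lemma hphi_frob t e : p \in [pchar k] ->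
  (hphi t) ^+ (p ^ e) - (dn t)%:P = (Nn t ^+ (p ^ e))%:P * 'X^(p ^ e).
Proof.
move=> hq; have hq' : p \in [pchar {poly k}] by rewrite pchar_poly.
have P0 : (0 < p ^ e)%N by rewrite expn_gt0 prime_gt0 // (pcharf_prime hq).
rewrite /hphi (@frob _ p e _ _ hq') exprMn -!rmorphXn.
have -> : dn t ^+ (p ^ e) = dn t by rewrite /dn; case: ifP => _; rewrite ?expr1n ?expr0n ?gtn_eqF.
by rewrite addrAC subrr add0r.
Qed.

Lemma phi_Xq q : (v0 != 0) || (v1 != 0) -> exists c : k,
  phi (c%:MP * xv k 0 1 ^+ q) = 'X^q \/ phi (c%:MP * xv k 1 0 ^+ q) = 'X^q.
Proof.
case/orP => h.
- exists ((Nn 1 ^+ q)^-1); left.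
  rewrite phiM phiC phiXn phi_xv // /hphi /dn /Nn /= add0r exprMn -rmorphXn mulrA -rmorphM.
  by rewrite mulVf ?mul1r // expf_neq0 // oppr_eq0 mulf_neq0.
- exists ((Nn 2 ^+ q)^-1); right.
  rewrite phiM phiC phiXn phi_xv // /hphi /dn /Nn /= polyC0 add0r [(_ * 'X) ^+ _]exprMn -rmorphXn mulrA -rmorphM.
  by rewrite mulVf ?mul1r // expf_neq0 // mulf_neq0.
Qed.

End Main.

From Stdlib Require Import Classical.

Lemma min_ex (P : nat -> Prop) : (exists n, P n) ->
  exists m, P m /\ forall j, P j -> (m <= j)%N.
Proof.
move=> [n Pn]; elim: n {-2}n (leqnn n) Pn => [|N IH] n hn Pn.
  exists n; split=> // j _; by rewrite leqn0 in hn; rewrite (eqP hn).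
case: (classic (exists j, P j /\ (j < n)%N)) => [[j [Pj hj]]|H].
  by apply: (IH j) => //; rewrite -ltnS; apply: leq_trans hj hn.
exists n; split=> // j Pj; rewrite leqNgt; apply/negP => hj; apply: H; exists j; by split.
Qed.

Section Comp.
Variable k : fieldType.

Lemma xv_comult i j : (i < 2)%N -> (j < 2)%N ->
  xv k i j \mPo comult k = xl k i 0 * xr k 0 j + xl k i 1 * xr k 1 j.
Proof.
move=> hi hj; rewrite /xv comp_mpolyXU -tnth_nth tnth_mktuple inordK;
  last by case: i hi => [|[|]] //; case: j hj => [|[|]].
by case: i hi => [|[|]] //; case: j hj => [|[|]].
Qed.

Lemma xv_inlt i j : (i < 2)%N -> (j < 2)%N -> xv k i j \mPo inlt k = xl k i j.
Proof.
move=> hi hj; rewrite /xv comp_mpolyXU -tnth_nth tnth_mktuple inordK;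
  last by case: i hi => [|[|]] //; case: j hj => [|[|]].
by case: i hi => [|[|]] //; case: j hj => [|[|]].
Qed.

Lemma xv_inrt i j : (i < 2)%N -> (j < 2)%N -> xv k i j \mPo inrt k = xr k i j.
Proof.
move=> hi hj; rewrite /xv comp_mpolyXU -tnth_nth tnth_mktuple inordK;
  last by case: i hi => [|[|]] //; case: j hj => [|[|]].
by case: i hi => [|[|]] //; case: j hj => [|[|]].
Qed.

Lemma counit_xv i j : (i < 2)%N -> (j < 2)%N -> counit (xv k i j) = (i == j)%:R.
Proof.
move=> hi hj; rewrite /counit /xv mevalXU.
have e : val (inord (i * 2 + j) : 'I_4) = (i * 2 + j)%N.
  by rewrite /= inordK //; case: i hi => [|[|]] //; case: j hj => [|[|]].
rewrite /unit_pt /=.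
rewrite e; by case: i hi {e} => [|[|]] //; case: j hj => [|[|]].
Qed.

End Comp.

Theorem mainTheorem4 (k : fieldType) (p : nat) (hp : prime p) (hchar : p \in [pchar k])
  (I : {mpoly k[4]} -> Prop) :
  infinitesimal_subgroup p I -> unipotent I -> nontrivial_sub I ->
  exists (s1 s2 : k) (n : nat),
    [/\ (s1 != 0) || (s2 != 0), (1 <= n)%N &
        forall f, I f <-> in_ideal_gen (H_gens p s1 s2 n) f].
Proof.
move=> [hI [n0 [hfrob hcounit hcomult _]]] hunip [f0 [hf0c hf0I]].
have hI' := hI; case: hI' => [I0 ID IM].
have J0 : forall h, h = 0 -> in_Jideal I h.
  move=> h ->; exists 0%N, (fun _ => 0), (fun _ => 0), (fun _ => 0), (fun _ => 0).
  by split => [[]|[]|]; rewrite // big_ord0.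
have comod1 : is_comodule I (fun i j : 'I_2 => xv k i j).
  split=> i j; last by rewrite counit_xv.
  apply: J0; rewrite xv_comult // big_ord_recr big_ord1 /= !xv_inlt // !xv_inrt //.
  by rewrite subrr.
have [v [[i0 hvi0] hv]] := hunip 2%N _ isT comod1.
set v0 := v ord0; set v1 := v ord_max.
have e1 : (lift ord0 ord0 : 'I_2) = ord_max by apply: val_inj.
have hv0 : I (v0%:MP * (xv k 0 0 - 1) + v1%:MP * xv k 0 1).
  have := hv ord0; rewrite big_ord_recr big_ord1 /= (_ : widen_ord _ ord0 = ord0); last by apply: val_inj.
  move=> H; rewrite (_ : _ + _ = (v ord0)%:MP * xv k 0 0 + (v ord_max)%:MP * xv k 0 1 - (v ord0)%:MP) //.
  by rewrite /v0 /v1; ring.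
have hv1 : I (v1%:MP * (xv k 1 1 - 1) + v0%:MP * xv k 1 0).
  have := hv ord_max; rewrite big_ord_recr big_ord1 /= (_ : widen_ord _ ord0 = ord0); last by apply: val_inj.
  move=> H; rewrite (_ : _ + _ = (v ord0)%:MP * xv k 1 0 + (v ord_max)%:MP * xv k 1 1 - (v ord_max)%:MP) //.
  by rewrite /v0 /v1; ring.
have hvnz : (v0 != 0) || (v1 != 0).
  by case: i0 hvi0 => [[|[|]] hi] // h; [rewrite /v0 (_ : ord0 = Ordinal hi) ?h // | rewrite /v1 (_ : ord_max = Ordinal hi) ?h ?orbT //]; apply: val_inj.
have comod2 : is_comodule I (fun _ _ : 'I_1 => detp k).
  split=> i j; last first.
    rewrite /counit /detp mevalB !mevalM -!/(counit _) !counit_xv //=.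
    by rewrite (ord1 i) (ord1 j) eqxx; rewrite mulr1 mulr0 subr0.
  apply: J0; rewrite big_ord1 /detp !rmorphB !rmorphM /= !xv_comult // !xv_inlt // !xv_inrt //.
  by apply/eqP; rewrite subr_eq0; apply/eqP; ring.
have [w [[i1 hw1] hw]] := hunip 1%N _ isT comod2.
have hdet : I (detp k - 1).
  have := hw ord0; rewrite big_ord1 (ord1 i1) in hw1 * => H.
  rewrite (_ : detp k - 1 = ((w ord0)^-1)%:MP * ((w ord0)%:MP * detp k - (w ord0)%:MP)); first exact: (IM).
  by rewrite mulrBr mulrA -!rmorphM mulVf // rmorph1 mul1r.
have inv_trick : forall (c : k) (X Y Q : {mpoly k[4]}), c != 0 ->
    X - Y = (1 - (c^-1 * c)%:MP) * Q -> X = Y.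
  move=> c X Y Q hc; rewrite mulVf // subrr mul0r => /eqP; rewrite subr_eq0 => /eqP //.
have htau : I (xv k 1 1 - (2 - xv k 0 0)).
  case/orP: (hvnz) => hnz.
  - have H : I ((v0^-1)%:MP * (v0%:MP * (detp k - 1) - (xv k 1 1 - 1) *
        (v0%:MP * (xv k 0 0 - 1) + v1%:MP * xv k 0 1) +
        xv k 0 1 * (v1%:MP * (xv k 1 1 - 1) + v0%:MP * xv k 1 0))).
      apply: (IM); apply: (ID); last exact: (IM).
      by apply: ideal_B => //; apply: (IM).
    apply: (eq_ind _ I H); symmetry; apply: (inv_trick v0 _ _ (xv k 1 1 - (2 - xv k 0 0)) hnz).
    by rewrite /detp; ring.
  - have H : I ((v1^-1)%:MP * (v1%:MP * (detp k - 1) - (xv k 0 0 - 1) *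
        (v1%:MP * (xv k 1 1 - 1) + v0%:MP * xv k 1 0) +
        xv k 1 0 * (v0%:MP * (xv k 0 0 - 1) + v1%:MP * xv k 0 1))).
      apply: (IM); apply: (ID); last exact: (IM).
      by apply: ideal_B => //; apply: (IM).
    apply: (eq_ind _ I H); symmetry; apply: (inv_trick v1 _ _ (xv k 1 1 - (2 - xv k 0 0)) hnz).
    by rewrite /detp; ring.
have [u0 [u1 huv]] : exists u0 u1 : k, u0 * v0 + u1 * v1 = 1.
  case/orP: (hvnz) => h; [exists v0^-1, 0 | exists 0, v1^-1];
    by rewrite ?mulVf // ?mul0r ?addr0 ?add0r.
have allI : forall n, (forall i j, (i < 2)%N -> (j < 2)%N -> I (xv k i j ^+ (p ^ n) - delta k i j)) ->
    forall i, (i < size (H_gens p v0 v1 n))%N -> I (nth 0 (H_gens p v0 v1 n) i).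
  move=> n hn; case=> [|[|[|[|[|[|[|[|i]]]]]]]] //= _.
  - exact: (hn 0%N 0%N).
  - by move: (hn 0%N 1%N isT isT); rewrite /delta /= subr0.
  - by move: (hn 1%N 0%N isT isT); rewrite /delta /= subr0.
  - exact: (hn 1%N 1%N).
have kerI : forall f, phi v0 v1 f = 0 -> I f.
  move=> f hf; apply: (igen_I hI (allI n0 hfrob)).
  by have := keyA huv p n0 f; rewrite hf mlift0 subr0.
pose Iphi g := exists f, I f /\ phi v0 v1 f = g.
have IphiD : forall a b, Iphi a -> Iphi b -> Iphi (a + b).
  move=> a b [fa [ha pa]] [fb [hb pb]]; exists (fa + fb); split; first exact: (ID).
  by rewrite phiD pa pb.
have IphiM : forall a b, Iphi b -> Iphi (a * b).
  move=> a b [fb [hb pb]]; exists (mlift u0 u1 a * fb); split; first exact: (IM).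
  by rewrite phiM pb phi_mlift.
have hXq0 : Iphi ('X^(p ^ n0)).
  have [c [hc|hc]] := phi_Xq (p ^ n0) hvnz.
  - exists (c%:MP * xv k 0 1 ^+ (p ^ n0)); split => //; apply: (IM).
    by move: (hfrob 0%N 1%N isT isT); rewrite /delta /= subr0.
  - exists (c%:MP * xv k 1 0 ^+ (p ^ n0)); split => //; apply: (IM).
    by move: (hfrob 1%N 0%N isT isT); rewrite /delta /= subr0.
have [m [[fm [hfm phfm]] hmin]] := @min_ex (fun j => Iphi ('X^j)) (ex_intro _ (p ^ n0)%N hXq0).
have hdivm : forall g, I g -> 'X^m %| phi v0 v1 g.
  move=> g hg; apply: (gcd_arg IphiD IphiM hXq0 hmin); by exists g.
have m0 : (0 < m)%N.
  rewrite lt0n; apply/negP => /eqP m0.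
  have := hcounit fm hfm; rewrite (@counit_phi k v0 v1 fm) phfm m0 expr0 hornerC => /eqP.
  by rewrite oner_eq0.
have m1 : (1 < m)%N.
  rewrite ltn_neqAle m0 andbT; apply/negP => /eqP m1.
  have hX : 'X %| phi v0 v1 f0.
    by rewrite -['X]subr0 -polyC0 dvdp_XsubCl /root -(@counit_phi k v0 v1) hf0c.
  have IX : Iphi 'X by exists fm; rewrite phfm -m1 expr1.
  have : Iphi (phi v0 v1 f0) by rewrite -(divpK hX); apply: IphiM.
  move=> [g [hg pg]]; apply: hf0I.
  have := kerI (f0 - g); rewrite phiB pg subrr => /(_ erefl) H.
  by rewrite -(subrK g f0); apply: (ID).
have [n [hn1 hmn]] : exists n, (1 <= n)%N /\ m = (p ^ n)%N.
  have [A [B hAB]] := J_transfer hdivm (hcomult fm hfm).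
  rewrite L3 phfm map_polyXn hornerXn in hAB.
  have [m' cop hm'] := pfactor_coprime hp m0.
  have pe0 : (0 < p ^ logn p m)%N by rewrite expn_gt0 prime_gt0.
  case: m' cop hm' => [|[|m']] cop hm'.
  - by rewrite hm' mul0n in m0.
  - exists (logn p m); split; last by rewrite {1}hm' mul1n.
    rewrite lt0n; apply/negP => /eqP he; move: m1; by rewrite hm' he expn0.
  - exfalso.
    have hlt : (p ^ logn p m < m)%N by rewrite {2}hm' ltn_Pmull.
    have := binom_zero pe0 hlt hAB; rewrite [X in 'C(X, _)]hm' binom_nz // => /eqP.
    rewrite -(dvdn_pcharf hchar) => hd.
    by rewrite (prime_coprime _ hp) hd in cop.
exists v0, v1, n; split => // f; split.
- move=> hf; have Hk := keyA huv p n f.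
  case/dvdpP: (hdivm f hf) => h hh.
  rewrite -(subrK (mlift u0 u1 (phi v0 v1 f)) f); apply: igenD => //.
  rewrite hh mliftM; apply: igenM.
  have [c [hc|hc]] := phi_Xq (p ^ n) hvnz.
  - have Hg : in_ideal_gen (H_gens p v0 v1 n) (c%:MP * xv k 0 1 ^+ (p ^ n)).
      by apply: igenM; apply: (@igen_nth k (H_gens p v0 v1 n) 1%N isT).
    have := keyA huv p n (c%:MP * xv k 0 1 ^+ (p ^ n)); rewrite hc => Hk2; rewrite hmn.
    rewrite (_ : mlift u0 u1 'X^(p ^ n) = c%:MP * xv k 0 1 ^+ (p ^ n) -
       (c%:MP * xv k 0 1 ^+ (p ^ n) - mlift u0 u1 'X^(p ^ n))); last by ring.
    exact: igenB.
  - have Hg : in_ideal_gen (H_gens p v0 v1 n) (c%:MP * xv k 1 0 ^+ (p ^ n)).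
      by apply: igenM; apply: (@igen_nth k (H_gens p v0 v1 n) 2%N isT).
    have := keyA huv p n (c%:MP * xv k 1 0 ^+ (p ^ n)); rewrite hc => Hk2; rewrite hmn.
    rewrite (_ : mlift u0 u1 'X^(p ^ n) = c%:MP * xv k 1 0 ^+ (p ^ n) -
       (c%:MP * xv k 1 0 ^+ (p ^ n) - mlift u0 u1 'X^(p ^ n))); last by ring.
    exact: igenB.
- move=> hf; apply: (igen_I hI _ hf); apply: allI => i j hi hj.
  have pd : phi v0 v1 (delta k i j) = (dn k (i * 2 + j))%:P.
    case: i hi => [|[|]] //; case: j hj => [|[|]] // _ _;
      rewrite /delta /dn /= ?phi1 ?polyC1 // polyC0 /phi mmap0 //.
  have pg : phi v0 v1 (xv k i j ^+ (p ^ n) - delta k i j) =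
      (Nn v0 v1 (i * 2 + j) ^+ (p ^ n))%:P * 'X^m.
    by rewrite phiB phiXn phi_xv // pd hmn hphi_frob.
  have : Iphi (phi v0 v1 (xv k i j ^+ (p ^ n) - delta k i j)).
    by rewrite pg; apply: IphiM; exists fm.
  move=> [g [hg pg']].
  have := kerI (xv k i j ^+ (p ^ n) - delta k i j - g); rewrite phiB pg' subrr => /(_ erefl) H.
  by rewrite -(subrK g (xv k i j ^+ (p ^ n) - delta k i j)); apply: (ID).
Qed.
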